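(* Let $|\psi\rangle\in\mathcal{H}'$ be a pure state and $\{(w_\mu,|\varphi_\mu\rangle)\}$ an ensemble of pure states of $\mathcal{H}'$ with probabilities $w_\mu\ge0$, $\sum_\mu w_\mu=1$, such that $$\sum_\mu w_\mu\,\mathcal{C}(|\varphi_\mu\rangle)\le\mathcal{C}(|\psi\rangle).$$ Then the transformation $|\psi\rangle\to\{(w_\mu,|\varphi_\mu\rangle)\}$ can be achieved by Z$_2$-invariant operations, i.e. there is a Z$_2$-invariant measurement $\{\mathcal{E}_\mu\}$ with $\mathcal{E}_\mu(|\psi\rangle\langle\psi|)=w_\mu|\varphi_\mu\rangle\langle\varphi_\mu|$ for every $\mu$.
   Context: $\mathcal{H}'$ is a two-dimensional Hilbert space with orthonormal basis $|0\rangle,|1\rangle$; $\pi=|0\rangle\langle0|-|1\rangle\langle1|$. A Z$_2$-invariant operation is a completely positive, trace-nonincreasing linear map $\mathcal{E}$ on operators on $\mathcal{H}'$ with $\mathcal{E}(\pi X\pi)=\pi\mathcal{E}(X)\pi$ for all $X$. A Z$_2$-invariant measurement is a (countable) family $\{\mathcal{E}_\mu\}$ of Z$_2$-invariant operations whose sum is trace-preserving. For a pure state $|\chi\rangle$, $\mathcal{C}(|\chi\rangle)=2\min\{|\langle0|\chi\rangle|^2,|\langle1|\chi\rangle|^2\}$. *)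

(* Defs.v *)
From HB Require Import structures.
From mathcomp Require Import all_boot all_algebra.
From mathcomp Require Import complex.
From mathcomp Require Import all_classical all_reals all_analysis.
Set Implicit Arguments. Unset Strict Implicit. Unset Printing Implicit Defensive.
Import GRing.Theory Num.Theory.
Import numFieldNormedType.Exports.
Local Open Scope classical_set_scope.
Local Open Scope ring_scope.

Definition sqnorm (R : realType) (z : R[i]) : R := complex.Re z ^+ 2 + complex.Im z ^+ 2.

Definition adjmx (R : realType) m n (A : 'M[R[i]]_(m, n)) : 'M[R[i]]_(n, m) :=
  (map_mx (@conjc R) A)^T.

(* a (normalized) pure state |chi> of H' = C^2, basis |0>,|1> *)
Definition pure_state (R : realType) (chi : 'cV[R[i]]_2) : Prop :=
  \sum_(i < 2) sqnorm (chi i 0) = 1.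

Definition ketbra (R : realType) (chi : 'cV[R[i]]_2) : 'M[R[i]]_2 :=
  chi *m adjmx chi.

Definition coh (R : realType) (chi : 'cV[R[i]]_2) : R :=
  2 * Num.min (sqnorm (chi 0 0)) (sqnorm (chi 1 0)).

(* positive semidefinite operator on C^I (I finite): <v|A|v> >= 0 for all v
   (order of the num field R[i]: nonnegative real) *)
Definition psd_fun (R : realType) (I : finType) (A : I -> I -> R[i]) : Prop :=
  forall v : I -> R[i],
    0 <= \sum_(i : I) \sum_(j : I) conjc (v i) * A i j * v j.

Definition psd (R : realType) n (A : 'M[R[i]]_n) : Prop := psd_fun (fun i j => A i j).

Definition is_linear_map (R : realType) (E : 'M[R[i]]_2 -> 'M[R[i]]_2) : Prop :=
  forall (a : R[i]) (X Y : 'M[R[i]]_2), E (a *: X + Y) = a *: E X + E Y.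

(* complete positivity: id_I (x) E is positive for every finite ancilla
   index set I; an operator on C^I (x) H' is given by its blocks X p q *)
Definition completely_positive (R : realType) (E : 'M[R[i]]_2 -> 'M[R[i]]_2) : Prop :=
  forall (I : finType) (X : I -> I -> 'M[R[i]]_2),
    psd_fun (fun p q : I * 'I_2 => X p.1 q.1 p.2 q.2) ->
    psd_fun (fun p q : I * 'I_2 => E (X p.1 q.1) p.2 q.2).

Definition trace_nonincreasing (R : realType) (E : 'M[R[i]]_2 -> 'M[R[i]]_2) : Prop :=
  forall X : 'M[R[i]]_2, psd X -> \tr (E X) <= \tr X.

Definition piZ2 (R : realType) : 'M[R[i]]_2 :=
  \matrix_(i < 2, j < 2) (if i == j then (if i == 0 then 1 else -1) else 0).

Definition Z2_invariant_operation (R : realType) (E : 'M[R[i]]_2 -> 'M[R[i]]_2) : Prop :=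
  [/\ is_linear_map E, completely_positive E, trace_nonincreasing E &
      forall X : 'M[R[i]]_2, E (piZ2 R *m X *m piZ2 R) = piZ2 R *m E X *m piZ2 R].

(* countable family indexed by nat (finite families: pad with the zero map);
   the sum is trace preserving: sum_mu tr E_mu(X) = tr X for all X,
   convergence in C = R^2 stated componentwise *)
Definition Z2_invariant_measurement (R : realType)
    (E : nat -> 'M[R[i]]_2 -> 'M[R[i]]_2) : Prop :=
  (forall mu, Z2_invariant_operation (E mu)) /\
  (forall X : 'M[R[i]]_2,
     (\sum_(mu < n) complex.Re (\tr (E mu X))) @[n --> \oo] --> (complex.Re (\tr X) : R) /\
     (\sum_(mu < n) complex.Im (\tr (E mu X))) @[n --> \oo] --> (complex.Im (\tr X) : R)).

(* Main.v *)
Require Import Defs.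
From HB Require Import structures.
From mathcomp Require Import all_boot all_algebra.
From mathcomp Require Import complex.
From mathcomp Require Import all_classical all_reals all_analysis.
From mathcomp Require Import ring lra.
Import GRing.Theory Num.Theory.
Import mathcomp.order.order.Order.TTheory.
Import numFieldNormedType.Exports.
Local Open Scope classical_set_scope.
Local Open Scope ring_scope.
Local Open Scope complex_scope.

Section Ops.
Variable R : realType.
Local Notation C := R[i].

Lemma sum2 (V : nmodType) (F : 'I_2 -> V) : \sum_(i < 2) F i = F 0 + F 1.
Proof. by rewrite big_ord_recl big_ord1; congr (F _ + F _); apply: val_inj. Qed.

Lemma ord2P (i : 'I_2) : i = 0 \/ i = 1.
Proof. by case: i => [[|[|//]]] Hi; [left|right]; apply: val_inj. Qed.

Lemma sum_pair (I : finType) (F : I * 'I_2 -> C) :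
  \sum_(p : I * 'I_2) F p = \sum_(i : I) (F (i, 0) + F (i, 1)).
Proof.
transitivity (\sum_(i : I) \sum_(j < 2) F (i, j)).
  by rewrite pair_bigA; apply: eq_bigr; case.
by apply: eq_bigr => i _; rewrite sum2.
Qed.

Lemma form_pair (I : finType) (F : I * 'I_2 -> I * 'I_2 -> C) :
  \sum_p \sum_q F p q = \sum_i \sum_j
    (F (i,0) (j,0) + F (i,0) (j,1) + F (i,1) (j,0) + F (i,1) (j,1)).
Proof.
rewrite sum_pair; apply: eq_bigr => i _; rewrite !sum_pair -big_split /=.
by apply: eq_bigr => j _; rewrite !addrA.
Qed.

Lemma sqnormE (z : C) : z * conjc z = (sqnorm z)%:C.
Proof. by case: z => a b; rewrite /sqnorm /=; simpc; congr (_ +i* _); ring. Qed.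


Definition Eop (k0 k1 l0 l1 : C) (X : 'M[C]_2) : 'M[C]_2 :=
 \matrix_(i, j) if i == 0 then
   (if j == 0 then k0 * X 0 0 * conjc k0 + l0 * X 1 1 * conjc l0
    else k0 * X 0 1 * conjc k1 + l0 * X 1 0 * conjc l1)
 else (if j == 0 then k1 * X 1 0 * conjc k0 + l1 * X 0 1 * conjc l0
    else k1 * X 1 1 * conjc k1 + l1 * X 0 0 * conjc l1).

Lemma Eop_lin k0 k1 l0 l1 : is_linear_map (Eop k0 k1 l0 l1).
Proof.
move=> a X Y; apply/matrixP => i j; rewrite !mxE.
by case: (ord2P i) => ->; case: (ord2P j) => -> /=; rewrite ?mxE; ring.
Qed.

Lemma Eop_cov k0 k1 l0 l1 X :
  Eop k0 k1 l0 l1 (piZ2 R *m X *m piZ2 R) = piZ2 R *m Eop k0 k1 l0 l1 X *m piZ2 R.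
Proof.
apply/matrixP => i j; rewrite !mxE !sum2 !mxE !sum2 !mxE.
by case: (ord2P i) => ->; case: (ord2P j) => -> /=; rewrite ?mxE ?sum2 ?mxE /=; ring.
Qed.


Lemma cjM (x y : C) : conjc (x * y) = conjc x * conjc y.
Proof. by case: x => a b; case: y => c d; simpc; congr (_ +i* _); ring. Qed.

Lemma cjK (x : C) : conjc (conjc x) = x.
Proof. by case: x => a b; simpc. Qed.

Lemma cj1 : conjc (1 : C) = 1.
Proof. by apply/eqP; rewrite eq_complex /= oppr0 !eqxx. Qed.

Lemma cj0 : conjc (0 : C) = 0.
Proof. by apply/eqP; rewrite eq_complex /= oppr0 !eqxx. Qed.

Lemma ge0_eq (a b c : C) : a + b = c -> 0 <= a -> 0 <= b -> 0 <= c.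
Proof. by move=> <- ha hb; apply: addr_ge0. Qed.

Lemma Eop_cp k0 k1 l0 l1 : completely_positive (Eop k0 k1 l0 l1).
Proof.
move=> I X hX v.
pose u1 := fun p : I * 'I_2 =>
  if p.2 == 0 then conjc k0 * v (p.1, 0) else conjc k1 * v (p.1, 1).
pose u2 := fun p : I * 'I_2 =>
  if p.2 == 0 then conjc l1 * v (p.1, 1) else conjc l0 * v (p.1, 0).
have h1 := hX u1; have h2 := hX u2.
rewrite form_pair in h1; rewrite form_pair in h2; rewrite form_pair.
apply: (@ge0_eq _ _ _ _ h1 h2).
rewrite -big_split; apply: eq_bigr => i _; rewrite -big_split.
apply: eq_bigr => j _; rewrite /u1 /u2 /= !mxE /= !cjM !cjK; ring.
Qed.

Lemma psd00 (X : 'M[C]_2) : psd X -> 0 <= X 0 0.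
Proof.
move=> /(_ (fun i => if i == 0 then 1 else 0)); rewrite !sum2.
rewrite (_ : (1 == 0 :> 'I_2) = false) // eqxx.
by rewrite cj1 cj0 !(mul0r,mulr0,mul1r,mulr1,addr0,add0r).
Qed.

Lemma psd11 (X : 'M[C]_2) : psd X -> 0 <= X 1 1.
Proof.
move=> /(_ (fun i => if i == 0 then 0 else 1)); rewrite !sum2.
rewrite (_ : (1 == 0 :> 'I_2) = false) // eqxx.
by rewrite cj1 cj0 !(mul0r,mulr0,mul1r,mulr1,addr0,add0r).
Qed.

Lemma Eop_tr k0 k1 l0 l1 (D0 D1 : R) X :
  k0 * conjc k0 + l1 * conjc l1 = D0%:C ->
  k1 * conjc k1 + l0 * conjc l0 = D1%:C ->
  \tr (Eop k0 k1 l0 l1 X) = X 0 0 * D0%:C + X 1 1 * D1%:C.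
Proof.
move=> <- <-; rewrite /mxtrace !sum2 !mxE /=; ring.
Qed.

Lemma Eop_op k0 k1 l0 l1 (D0 D1 : R) :
  k0 * conjc k0 + l1 * conjc l1 = D0%:C ->
  k1 * conjc k1 + l0 * conjc l0 = D1%:C ->
  D0 <= 1 -> D1 <= 1 ->
  Z2_invariant_operation (Eop k0 k1 l0 l1).
Proof.
move=> h0 h1 d0 d1; split.
- exact: Eop_lin.
- exact: Eop_cp.
- move=> X hX; rewrite (Eop_tr _ _ _ _ _ _ _ h0 h1) -subr_ge0.
  rewrite (_ : _ - _ = X 0 0 * (1 - D0)%:C + X 1 1 * (1 - D1)%:C); last first.
    rewrite /mxtrace !sum2 !rmorphB /=; ring.
  by rewrite addr_ge0 // mulr_ge0 ?psd00 ?psd11 // ler0c subr_ge0.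
- exact: Eop_cov.
Qed.


Lemma cjR (x : R) : conjc (x%:C) = x%:C.
Proof. by apply/eqP; rewrite eq_complex /= oppr0 !eqxx. Qed.

Lemma ketbraE (v : 'cV[C]_2) i j : ketbra v i j = v i 0 * conjc (v j 0).
Proof. by rewrite /ketbra /adjmx !mxE big_ord1 !mxE. Qed.

Lemma Eop_ket k0 k1 l0 l1 (psi phi : 'cV[C]_2) (al be : R) :
 k0 * psi 0 0 = al%:C * phi 0 0 -> k1 * psi 1 0 = al%:C * phi 1 0 ->
 l0 * psi 1 0 = be%:C * phi 0 0 -> l1 * psi 0 0 = be%:C * phi 1 0 ->
 Eop k0 k1 l0 l1 (ketbra psi) = (al^+2 + be^+2)%:C *: ketbra phi.
Proof.
move=> h1 h2 h3 h4.
pose Kp (i : 'I_2) := if i == 0 then k0 * psi 0 0 else k1 * psi 1 0.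
pose Lp (i : 'I_2) := if i == 0 then l0 * psi 1 0 else l1 * psi 0 0.
have HK i : Kp i = al%:C * phi i 0.
  by case: (ord2P i) => -> /=.
have HL i : Lp i = be%:C * phi i 0.
  by case: (ord2P i) => -> /=.
apply/matrixP => i j.
have -> : Eop k0 k1 l0 l1 (ketbra psi) i j =
   Kp i * conjc (Kp j) + Lp i * conjc (Lp j).
  rewrite mxE !ketbraE.
  rewrite /Kp /Lp; case: (ord2P i) => ->; case: (ord2P j) => -> /=; rewrite ?ketbraE ?cjM; ring.
rewrite !HK !HL mxE ketbraE !cjM !cjR rmorphD /= !rmorphXn /=.
by case: (ord2P i) => ->; case: (ord2P j) => -> /=; ring.
Qed.

Lemma ser_lin (f g : nat -> R) A B x y :
  (\sum_(k < n) f k) @[n --> \oo] --> A ->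
  (\sum_(k < n) g k) @[n --> \oo] --> B ->
  (\sum_(k < n) (x * f k + y * g k)) @[n --> \oo] --> x * A + y * B.
Proof.
move=> hf hg.
have -> : (fun n => \sum_(k < n) (x * f k + y * g k)) =
    (fun n => x * \sum_(k < n) f k + y * \sum_(k < n) g k).
  by apply/funext => n; rewrite big_split /= -!mulr_sumr.
have h1 := cvgMl_tmp (a:=x) hf. have h2 := cvgMl_tmp (a:=y) hg. have h3 := cvgD (h1 _) (h2 _). exact: h3.
Qed.

Lemma psum_nd (f : nat -> R) : (forall k, 0 <= f k) ->
  nondecreasing_seq (fun n => \sum_(k < n) f k).
Proof.
move=> f0 m n mn.
have := @nondecreasing_series R f xpredT 0 (fun k _ _ => f0 k) m n mn.
by rewrite /= !big_mkord.
Qed.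

Lemma term_le (f : nat -> R) L : (forall k, 0 <= f k) ->
  (\sum_(k < n) f k) @[n --> \oo] --> L -> forall k, f k <= L.
Proof.
move=> f0 hL k.
have cv : cvgn (fun n => \sum_(k < n) f k) by apply/cvg_ex; exists L.
have := nondecreasing_cvgn_le (psum_nd _ f0) cv k.+1.
rewrite (cvg_lim _ hL) //= big_ord_recr /=.
apply: le_trans; rewrite lerDr.
by apply: sumr_ge0 => i _.
Qed.

Lemma psum_cvg (f : nat -> R) M : (forall k, 0 <= f k) ->
  (forall n, \sum_(k < n) f k <= M) ->
  exists L, (\sum_(k < n) f k) @[n --> \oo] --> L /\ L <= M.
Proof.
move=> f0 hM.
have cv : cvgn (fun n => \sum_(k < n) f k).
  apply: nondecreasing_is_cvgn; first exact: psum_nd.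
  by exists M => _ [n _ <-].
exists (limn (fun n => \sum_(k < n) f k)); split => //.
apply: limr_le => //; exact: nearW.
Qed.


Lemma sqnormM (x y : C) : sqnorm (x * y) = sqnorm x * sqnorm y.
Proof. by case: x => a b; case: y => c d; rewrite /sqnorm /=; ring. Qed.

Lemma sqnormR (x : R) : sqnorm (x%:C) = x ^+ 2.
Proof. by rewrite /sqnorm /= expr0n /= addr0. Qed.

Lemma sqnorm_ge0 (x : C) : 0 <= sqnorm x.
Proof. by rewrite /sqnorm addr_ge0 // sqr_ge0. Qed.

Lemma sqnorm_eq0 (x : C) : sqnorm x = 0 -> x = 0.
Proof.
case: x => a b; rewrite /sqnorm /= => /eqP.
rewrite paddr_eq0 ?sqr_ge0 // !sqrf_eq0 => /andP[/eqP -> /eqP ->] //.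
Qed.

Lemma ReMR (z : C) (r : R) : complex.Re (z * r%:C) = complex.Re z * r.
Proof. by case: z => a b /=; ring. Qed.

Lemma ImMR (z : C) (r : R) : complex.Im (z * r%:C) = complex.Im z * r.
Proof. by case: z => a b /=; ring. Qed.

Lemma ReD (x y : C) : complex.Re (x + y) = complex.Re x + complex.Re y.
Proof. by case: x => a b; case: y => c d. Qed.

Lemma ImD (x y : C) : complex.Im (x + y) = complex.Im x + complex.Im y.
Proof. by case: x => a b; case: y => c d. Qed.

Lemma sqnormV (x : C) : x != 0 -> sqnorm (x^-1) = (sqnorm x)^-1.
Proof.
move=> hx.
have hs : sqnorm x != 0 by apply/eqP => /sqnorm_eq0; apply/eqP.
have h1 : sqnorm x * sqnorm (x^-1) = 1.
  by rewrite -sqnormM mulfV // /sqnorm /= expr0n /= addr0 expr1n.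
by apply: (mulfI hs); rewrite h1 mulfV.
Qed.

Lemma cRD (x y : R) : (x + y)%:C = x%:C + y%:C :> C.
Proof. by apply/eqP; rewrite eq_complex /= addr0 !eqxx. Qed.

End Ops.

Theorem theorem13 (R : realType) (psi : 'cV[R[i]]_2)
    (w : nat -> R) (phi : nat -> 'cV[R[i]]_2) :
  pure_state psi ->
  (forall mu, pure_state (phi mu)) ->
  (forall mu, 0 <= w mu) ->
  (\sum_(mu < n) w mu) @[n --> \oo] --> (1 : R) ->
  (\sum_(mu <oo) (w mu * coh (phi mu))%:E <= (coh psi)%:E)%E ->
  exists E : nat -> 'M[R[i]]_2 -> 'M[R[i]]_2,
    Z2_invariant_measurement E /\
    forall mu, E mu (ketbra psi) = (Complex (w mu) 0) *: ketbra (phi mu).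
Proof.
move=> hpsi hphi w0 hw hcoh.
set a := psi 0 0; set b := psi 1 0.
have hab : sqnorm a + sqnorm b = 1 by move: hpsi; rewrite /pure_state sum2.
have hcd mu : sqnorm (phi mu 0 0) + sqnorm (phi mu 1 0) = 1.
  by have := hphi mu; rewrite /pure_state sum2.
pose m mu := Num.min (sqnorm (phi mu 0 0)) (sqnorm (phi mu 1 0)).
have m0 mu : 0 <= m mu by rewrite /m le_min !sqnorm_ge0.
have wm0 mu : 0 <= w mu * m mu by rewrite mulr_ge0.
have hbound n : \sum_(k < n) w k * m k <= Num.min (sqnorm a) (sqnorm b).
  have h := @nneseries_lim_ge R (fun mu => (w mu * coh (phi mu))%:E) xpredT 0 n.
  have h2 : (\sum_(0 <= i < n | xpredT i) ((w i * coh (phi i))%:E) <= (coh psi)%:E)%E.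
    apply: le_trans hcoh; apply: h => k _ _.
    by rewrite lee_fin mulr_ge0 // mulr_ge0 // m0.
  move: h2; rewrite sumEFin lee_fin big_mkord /coh => h2.
  have e : \sum_(i < n) w i * (2 * m i) = 2 * \sum_(k < n) w k * m k.
    by rewrite mulr_sumr; apply: eq_bigr => i _; ring.
  have h3 : 2 * \sum_(k < n) w k * m k <= 2 * Num.min (sqnorm a) (sqnorm b).
    by rewrite -e; exact: h2.
  by rewrite ler_pM2l in h3.
have [mb [hmb hmbM]] := psum_cvg _ _ _ wm0 hbound.
have mbp : mb <= sqnorm a by move: hmbM; rewrite le_min => /andP[].
have mbq : mb <= sqnorm b by move: hmbM; rewrite le_min => /andP[].
have mb0 : 0 <= mb := le_trans (wm0 0%N) (term_le _ _ _ wm0 hmb 0%N).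
pose s := (1 - mb - sqnorm a) / (1 - 2 * mb).
have [hs0 [hs1 hsp]] : 0 <= s /\ s <= 1 /\ (1 - s) + (2 * s - 1) * mb = sqnorm a.
  have [hd|hd] := eqVneq (1 - 2 * mb) 0.
    rewrite /s hd invr0 mulr0; split => //; split; lra.
  have hdp : 0 < 1 - 2 * mb.
    have : 0 <= 1 - 2 * mb by lra.
    by rewrite le_eqVlt eq_sym (negPf hd).
  have hsd : s * (1 - 2 * mb) = 1 - mb - sqnorm a by rewrite /s divfK.
  split; first by rewrite /s divr_ge0 //; lra.
  split; first by rewrite /s ler_pdivrMr // mul1r; lra.
  nra.
pose sa mu := if sqnorm (phi mu 0 0) <= sqnorm (phi mu 1 0) then s else 1 - s.
have sa0 mu : 0 <= sa mu by rewrite /sa; case: ifP => _; lra.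
have sa1 mu : 0 <= 1 - sa mu by rewrite /sa; case: ifP => _; lra.
pose al mu := Num.sqrt (w mu * sa mu).
pose be mu := Num.sqrt (w mu * (1 - sa mu)).
have hal mu : al mu ^+ 2 = w mu * sa mu by rewrite sqr_sqrtr // mulr_ge0.
have hbe mu : be mu ^+ 2 = w mu * (1 - sa mu) by rewrite sqr_sqrtr // mulr_ge0.
pose t mu := al mu ^+ 2 * sqnorm (phi mu 0 0) + be mu ^+ 2 * sqnorm (phi mu 1 0).
pose t' mu := al mu ^+ 2 * sqnorm (phi mu 1 0) + be mu ^+ 2 * sqnorm (phi mu 0 0).
have ht mu : t mu = (1 - s) * w mu + (2 * s - 1) * (w mu * m mu).
  rewrite /t hal hbe /m /sa; have := hcd mu.
  set x := sqnorm (phi mu 0 0); set y := sqnorm (phi mu 1 0) => hxy.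
  have -> : y = 1 - x by lra.
  case: ifP => h.
    by rewrite (min_l h); ring.
  have h' : 1 - x <= x by apply: ltW; rewrite ltNge h.
  by rewrite (min_r h'); ring.
have ht' mu : t' mu = s * w mu + (1 - 2 * s) * (w mu * m mu).
  rewrite /t' hal hbe /m /sa; have := hcd mu.
  set x := sqnorm (phi mu 0 0); set y := sqnorm (phi mu 1 0) => hxy.
  have -> : y = 1 - x by lra.
  case: ifP => h.
    by rewrite (min_l h); ring.
  have h' : 1 - x <= x by apply: ltW; rewrite ltNge h.
  by rewrite (min_r h'); ring.
have t0 mu : 0 <= t mu by rewrite /t addr_ge0 // mulr_ge0 ?sqr_ge0 ?sqnorm_ge0.
have t'0 mu : 0 <= t' mu by rewrite /t' addr_ge0 // mulr_ge0 ?sqr_ge0 ?sqnorm_ge0.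
have St : (\sum_(k < n) t k) @[n --> \oo] --> sqnorm a.
  have -> : (fun n => \sum_(k < n) t k) =
    (fun n => \sum_(k < n) ((1 - s) * w k + (2 * s - 1) * (w k * m k))).
    by apply/funext => n; apply: eq_bigr => k _; exact: ht.
  have -> : sqnorm a = (1 - s) * 1 + (2 * s - 1) * mb by rewrite mulr1.
  have HH := (@ser_lin R w (fun k => w k * m k) 1 mb (1 - s) (2 * s - 1) hw hmb). exact HH.
have St' : (\sum_(k < n) t' k) @[n --> \oo] --> sqnorm b.
  have -> : (fun n => \sum_(k < n) t' k) =
    (fun n => \sum_(k < n) (s * w k + (1 - 2 * s) * (w k * m k))).
    by apply/funext => n; apply: eq_bigr => k _; exact: ht'.
  have -> : sqnorm b = s * 1 + (1 - 2 * s) * mb by nra.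
  have HH := (@ser_lin R w (fun k => w k * m k) 1 mb s (1 - 2 * s) hw hmb). exact HH.
have hza : sqnorm a = 0 -> forall mu,
    (al mu)%:C * phi mu 0 0 = 0 /\ (be mu)%:C * phi mu 1 0 = 0.
  move=> pa0 mu; have := term_le _ _ _ t0 St mu; rewrite pa0 => tle.
  have := t0 mu; rewrite /t => tge.
  have h1 : 0 <= al mu ^+ 2 * sqnorm (phi mu 0 0) by rewrite mulr_ge0 ?sqr_ge0 ?sqnorm_ge0.
  have h2 : 0 <= be mu ^+ 2 * sqnorm (phi mu 1 0) by rewrite mulr_ge0 ?sqr_ge0 ?sqnorm_ge0.
  split; apply: sqnorm_eq0; rewrite sqnormM sqnormR; rewrite /t in tle; lra.
have hzb : sqnorm b = 0 -> forall mu,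
    (al mu)%:C * phi mu 1 0 = 0 /\ (be mu)%:C * phi mu 0 0 = 0.
  move=> pb0 mu; have := term_le _ _ _ t'0 St' mu; rewrite pb0 => tle.
  have := t'0 mu; rewrite /t' => tge.
  have h1 : 0 <= al mu ^+ 2 * sqnorm (phi mu 1 0) by rewrite mulr_ge0 ?sqr_ge0 ?sqnorm_ge0.
  have h2 : 0 <= be mu ^+ 2 * sqnorm (phi mu 0 0) by rewrite mulr_ge0 ?sqr_ge0 ?sqnorm_ge0.
  split; apply: sqnorm_eq0; rewrite sqnormM sqnormR; rewrite /t' in tle; lra.
pose k0 mu := if a == 0 then (Num.sqrt (w mu))%:C else (al mu)%:C * phi mu 0 0 / a.
pose k1 mu := if b == 0 then (Num.sqrt (w mu))%:C else (al mu)%:C * phi mu 1 0 / b.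
pose l0 mu := if b == 0 then 0 else (be mu)%:C * phi mu 0 0 / b.
pose l1 mu := if a == 0 then 0 else (be mu)%:C * phi mu 1 0 / a.
pose D0 mu := sqnorm (k0 mu) + sqnorm (l1 mu).
pose D1 mu := sqnorm (k1 mu) + sqnorm (l0 mu).
have hD0 mu : k0 mu * conjc (k0 mu) + l1 mu * conjc (l1 mu) = (D0 mu)%:C.
  by rewrite !sqnormE /D0 cRD.
have hD1 mu : k1 mu * conjc (k1 mu) + l0 mu * conjc (l0 mu) = (D1 mu)%:C.
  by rewrite !sqnormE /D1 cRD.
have D00 mu : 0 <= D0 mu by rewrite addr_ge0 ?sqnorm_ge0.
have D10 mu : 0 <= D1 mu by rewrite addr_ge0 ?sqnorm_ge0.
have sqw mu : sqnorm ((Num.sqrt (w mu))%:C) = w mu by rewrite sqnormR sqr_sqrtr.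
have sq0 : sqnorm (0 : R[i]) = 0 by rewrite /sqnorm /= expr0n /= addr0.
have SD0 : (\sum_(k < n) D0 k) @[n --> \oo] --> (1 : R).
  have [ha0|ha] := eqVneq a 0.
    have -> : (fun n => \sum_(k < n) D0 k) = (fun n => \sum_(k < n) w k).
      by apply/funext => n; apply: eq_bigr => k _; rewrite /D0 /k0 /l1 ha0 eqxx sqw sq0 addr0.
    exact: hw.
  have hpa : sqnorm a != 0 by apply/eqP => /sqnorm_eq0; apply/eqP.
  have -> : (fun n => \sum_(k < n) D0 k) = (fun n => \sum_(k < n)
      ((1 - s) / sqnorm a * w k + (2 * s - 1) / sqnorm a * (w k * m k))).
    apply/funext => n; apply: eq_bigr => k _.
    have := ht k; rewrite /D0 /k0 /l1 /t (negPf ha) !sqnormM !sqnormR sqnormV //.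
    move=> e; rewrite -mulrDl e; ring.
  have HH := (@ser_lin R w (fun k => w k * m k) 1 mb ((1 - s) / sqnorm a)
    ((2 * s - 1) / sqnorm a) hw hmb).
  have e : (1 - s) / sqnorm a * 1 + (2 * s - 1) / sqnorm a * mb = 1.
    rewrite -[X in _ = X](divff hpa) -{3}hsp; ring.
  by rewrite e in HH.
have SD1 : (\sum_(k < n) D1 k) @[n --> \oo] --> (1 : R).
  have [hb0|hb] := eqVneq b 0.
    have -> : (fun n => \sum_(k < n) D1 k) = (fun n => \sum_(k < n) w k).
      by apply/funext => n; apply: eq_bigr => k _; rewrite /D1 /k1 /l0 hb0 eqxx sqw sq0 addr0.
    exact: hw.
  have hpb : sqnorm b != 0 by apply/eqP => /sqnorm_eq0; apply/eqP.
  have -> : (fun n => \sum_(k < n) D1 k) = (fun n => \sum_(k < n)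
      (s / sqnorm b * w k + (1 - 2 * s) / sqnorm b * (w k * m k))).
    apply/funext => n; apply: eq_bigr => k _.
    have := ht' k; rewrite /D1 /k1 /l0 /t' (negPf hb) !sqnormM !sqnormR sqnormV //.
    move=> e; rewrite -mulrDl e; ring.
  have HH := (@ser_lin R w (fun k => w k * m k) 1 mb (s / sqnorm b)
    ((1 - 2 * s) / sqnorm b) hw hmb).
  have hsb : s * 1 + (1 - 2 * s) * mb = sqnorm b by nra.
  have e : s / sqnorm b * 1 + (1 - 2 * s) / sqnorm b * mb = 1.
    rewrite -[X in _ = X](divff hpb) -{3}hsb; ring.
  by rewrite e in HH.
have D0le mu : D0 mu <= 1 := term_le _ _ _ D00 SD0 mu.
have D1le mu : D1 mu <= 1 := term_le _ _ _ D10 SD1 mu.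
exists (fun mu => Eop R (k0 mu) (k1 mu) (l0 mu) (l1 mu)); split.
  split => [mu|X]; first exact: (Eop_op _ _ _ _ _ _ _ (hD0 mu) (hD1 mu)).
  have HT mu : \tr (Eop R (k0 mu) (k1 mu) (l0 mu) (l1 mu) X) =
      X 0 0 * (D0 mu)%:C + X 1 1 * (D1 mu)%:C.
    exact: (Eop_tr _ _ _ _ _ _ _ _ (hD0 mu) (hD1 mu)).
  have trX : \tr X = X 0 0 + X 1 1 by rewrite /mxtrace sum2.
  split.
    have -> : (fun n => \sum_(mu < n) complex.Re (\tr (Eop R (k0 mu) (k1 mu) (l0 mu) (l1 mu) X)))
      = (fun n => \sum_(mu < n) (complex.Re (X 0 0) * D0 mu + complex.Re (X 1 1) * D1 mu)).
      by apply/funext => n; apply: eq_bigr => k _; rewrite HT ReD !ReMR.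
    have HH := (@ser_lin R D0 D1 1 1 (complex.Re (X 0 0)) (complex.Re (X 1 1)) SD0 SD1).
    by rewrite !mulr1 -ReD -trX in HH.
  have -> : (fun n => \sum_(mu < n) complex.Im (\tr (Eop R (k0 mu) (k1 mu) (l0 mu) (l1 mu) X)))
    = (fun n => \sum_(mu < n) (complex.Im (X 0 0) * D0 mu + complex.Im (X 1 1) * D1 mu)).
    by apply/funext => n; apply: eq_bigr => k _; rewrite HT ImD !ImMR.
  have HH := (@ser_lin R D0 D1 1 1 (complex.Im (X 0 0)) (complex.Im (X 1 1)) SD0 SD1).
  by rewrite !mulr1 -ImD -trX in HH.
move=> mu.
have hw2 : w mu = al mu ^+ 2 + be mu ^+ 2 by rewrite hal hbe; ring.
rewrite [in RHS]hw2.
apply: Eop_ket.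
- rewrite /k0; case: (eqVneq a 0) => [ha0|ha].
    rewrite -/a ha0 mulr0; apply/esym; apply: (proj1 (hza _ mu)).
    by rewrite ha0 sq0.
  by rewrite -/a -/b divfK.
- rewrite /k1; case: (eqVneq b 0) => [hb0|hb].
    rewrite -/a -/b hb0 mulr0; apply/esym; apply: (proj1 (hzb _ mu)).
    by rewrite hb0 sq0.
  by rewrite -/a -/b divfK.
- rewrite /l0; case: (eqVneq b 0) => [hb0|hb].
    rewrite -/a -/b hb0 mul0r; apply/esym; apply: (proj2 (hzb _ mu)).
    by rewrite hb0 sq0.
  by rewrite -/a -/b divfK.
- rewrite /l1; case: (eqVneq a 0) => [ha0|ha].
    rewrite -/a -/b ha0 mul0r; apply/esym; apply: (proj2 (hza _ mu)).
    by rewrite ha0 sq0.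
  by rewrite -/a -/b divfK.
Qed.
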